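(* Let $\mathcal{G}$ be a groupoid (not necessarily finite). Define $\widetilde{S}_{*1}\colon\mathrm{Aut}(\mathcal{G})\to h\mathrm{aut}(\widetilde{S}(\mathcal{G}))$ and $\widetilde{S}_{*2}\colon\mathrm{Aut}(\mathcal{G})\to h\mathrm{Aut}(\widetilde{S}(\mathcal{G}))$ by $u\mapsto[\widetilde{S}(u)]$. Then $\eta_{\widetilde{S}(\mathcal{G})}\circ\widetilde{S}_{*2}=\widetilde{S}_{*1}$, and $\widetilde{S}_{*1}$ is a monomorphism of groups. Moreover, if $\mathcal{G}$ is finite, then $\widetilde{S}_{*2}$ is an isomorphism.
   Context: For a groupoid $\mathcal{H}$, the quasi-schemoid $\widetilde{S}(\mathcal{H})=(\widetilde{\mathcal{H}},S)$ has $ob(\widetilde{\mathcal{H}})=mor(\mathcal{H})$, $\mathrm{Hom}_{\widetilde{\mathcal{H}}}(g,h)=\{(h,g)\}$ if $t(h)=t(g)$ and empty otherwise (composition $(k,h)\circ(h,g)=(k,g)$), and partition $S=\{\mathcal{G}_f\}_{f\in mor(\mathcal{H})}$ with $\mathcal{G}_f=\{(k,l)\mid k^{-1}l=f\}$. For a functor $u\colon\mathcal{G}\to\mathcal{H}$ of groupoids, $\widetilde{S}(u)$ is the morphism of quasi-schemoids sending an object $i$ to $u(i)$ and a morphism $(h,g)$ to $(u(h),u(g))$. A quasi-schemoid is a small category with a partition of its morphisms such that for blocks $\sigma,\tau,\mu$ and $f,g\in\mu$ the number of composable pairs $(a,b)\in\sigma\times\tau$ with $a\circ b=f$ equals that with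 $a\circ b=g$; a morphism of quasi-schemoids is a functor sending each block of the source partition into some block of the target partition. Product: $(\mathcal{C},S)\times(\mathcal{E},S')=(\mathcal{C}\times\mathcal{E},\{\sigma\times\tau\})$. $[1]$ has objects $0,1$ and one non-identity morphism $0\to1$; $I=([1],\{\{f\}\}_f)$. A homotopy $H\colon F\Rightarrow G$ is a morphism $H\colon(\mathcal{C},S)\times I\to(\mathcal{D},S')$ with $H\circ\varepsilon_0=F$, $H\circ\varepsilon_1=G$ ($\varepsilon_i(a)=(a,i)$, $\varepsilon_i(f)=(f,1_i)$). $F\sim G$ means there is a homotopy $F\Rightarrow G$ or $G\Rightarrow F$; $F\simeq G$ means a finite chain $F=F_0\sim\cdots\sim F_n=G$ ($\simeq$ is an equivalence relation compatible with composition). $h\mathrm{aut}(A)$ is the group of $\simeq$-classes of self-homotopy equivalences of $A$ (morphisms $F\colon A\to A$ with some $G$ satisfying $FG\simeq1$, $GF\simeq1$) under composition; $h\mathrm{Aut}(A)$ is the group of $\simeq$-classes of automorphisms (invertible morphisms) of the quasi-schemoid $A$; $\eta_A\colon h\mathrm{Aut}(A)\to h\mathrm{aut}(A)$ is the natural map induced by inclusion. $\mathrm{Aut}(\mathcal{G})$ is the group of autofunctors (invertible functors) of $\mathcal{G}$. *)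

(* Defs.v *)
From Stdlib Require Import Relations List ClassicalEpsilon.
Set Implicit Arguments.
Unset Strict Implicit.
Local Notation "p .1" := (fst p) (at level 1, left associativity, format "p .1").
Local Notation "p .2" := (snd p) (at level 1, left associativity, format "p .2").

(* Small categories, given by their raw data.  A morphism f has source *)
(* [src f] and target [tgt f]; [comp f g H] is f o g (g first), defined *)
(* when H : tgt g = src f.                                             *)
Record Cat := mkCat {
  ob : Type;
  mor : Type;
  src : mor -> ob;
  tgt : mor -> ob;
  idm : ob -> mor;
  comp : forall f g : mor, tgt g = src f -> mor }.
Arguments src {c} _.
Arguments tgt {c} _.
Arguments idm {c} _.
Arguments comp {c} _ _ _.

Definition is_cat (C : Cat) : Prop :=
  (forall x : ob C, src (idm x) = x) /\
  (forall x : ob C, tgt (idm x) = x) /\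
  (forall (f g : mor C) (H : tgt g = src f), src (comp f g H) = src g) /\
  (forall (f g : mor C) (H : tgt g = src f), tgt (comp f g H) = tgt f) /\
  (forall (f : mor C) (H : tgt f = src (idm (tgt f))), comp (idm (tgt f)) f H = f) /\
  (forall (f : mor C) (H : tgt (idm (src f)) = src f), comp f (idm (src f)) H = f) /\
  (forall (f g h : mor C) (H1 : tgt h = src g) (H2 : tgt (comp g h H1) = src f)
          (H3 : tgt g = src f) (H4 : tgt h = src (comp f g H3)),
      comp f (comp g h H1) H2 = comp (comp f g H3) h H4).

Record Groupoid := mkGpd {
  gcat :> Cat;
  ginv : mor gcat -> mor gcat;
  gpd_is_cat : is_cat gcat;
  src_inv : forall f, src (ginv f) = tgt f;
  tgt_inv : forall f, tgt (ginv f) = src f;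
  inv_l : forall f (H : tgt f = src (ginv f)), comp (ginv f) f H = idm (src f);
  inv_r : forall f (H : tgt (ginv f) = src f), comp f (ginv f) H = idm (tgt f) }.

Record Fun (C D : Cat) := mkFun { fo : ob C -> ob D; fm : mor C -> mor D }.
Arguments fo {C D} _ _.
Arguments fm {C D} _ _.

Definition is_functor (C D : Cat) (F : Fun C D) : Prop :=
  (forall f, src (fm F f) = fo F (src f)) /\
  (forall f, tgt (fm F f) = fo F (tgt f)) /\
  (forall x, fm F (idm x) = idm (fo F x)) /\
  (forall f g (H : tgt g = src f) (H' : tgt (fm F g) = src (fm F f)),
      fm F (comp f g H) = comp (fm F f) (fm F g) H').

Definition fcomp (C D E : Cat) (F : Fun D E) (G : Fun C D) : Fun C E :=
  mkFun (fun x => fo F (fo G x)) (fun f => fm F (fm G f)).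

Definition idF (C : Cat) : Fun C C := mkFun (fun x => x) (fun f => f).

Definition is_autofunctor (G : Groupoid) (u : Fun G G) : Prop :=
  is_functor u /\
  exists v : Fun G G, is_functor v /\ fcomp u v = idF G /\ fcomp v u = idF G.

Definition finite_type (T : Type) : Prop := exists l : list T, forall x, In x l.

Definition finite_groupoid (G : Groupoid) : Prop :=
  finite_type (ob G) /\ finite_type (mor G).

(* Quasi-schemoids (underlying data): a category together with a       *)
(* partition of its morphisms.  The partition is encoded by a labelling *)
(* [blk : mor -> lab]; the blocks are the nonempty fibres of [blk].     *)
Record QS := mkQS { qcat :> Cat; lab : Type; blk : mor qcat -> lab }.
Arguments blk {q} _.

(* The quasi-schemoid axiom (not needed to state the theorem, recorded *)
(* for completeness): counts are compared as cardinalities, i.e. by     *)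
(* existence of a bijection.                                            *)
Definition composable_pairs (A : QS) (s t : lab A) (f : mor A) : Type :=
  { ab : mor A * mor A & { H : tgt ab.2 = src ab.1 |
      blk ab.1 = s /\ blk ab.2 = t /\ comp ab.1 ab.2 H = f } }.
Definition is_quasi_schemoid (A : QS) : Prop :=
  is_cat A /\
  forall (s t : lab A) (f g : mor A), blk f = blk g ->
    exists (phi : composable_pairs s t f -> composable_pairs s t g)
           (psi : composable_pairs s t g -> composable_pairs s t f),
      (forall x, psi (phi x) = x) /\ (forall y, phi (psi y) = y).

Definition is_qs_morphism (A B : QS) (F : Fun A B) : Prop :=
  is_functor F /\
  forall l : lab A, exists l' : lab B, forall a : mor A, blk a = l -> blk (fm F a) = l'.

Definition prod_cat (C D : Cat) : Cat :=
  @mkCat (ob C * ob D) (mor C * mor D)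
    (fun f => (src f.1, src f.2)) (fun f => (tgt f.1, tgt f.2))
    (fun x => (idm x.1, idm x.2))
    (fun f g H => (comp f.1 g.1 (f_equal fst H : tgt g.1 = src f.1),
                   comp f.2 g.2 (f_equal snd H : tgt g.2 = src f.2))).

Definition qprod (A B : QS) : QS :=
  @mkQS (prod_cat A B) (lab A * lab B) (fun f => (blk f.1, blk f.2)).

(* the category [1] : objects 0 = false, 1 = true, one arrow 0 -> 1 *)
Inductive I1mor := i0 | i1 | f01.
Definition I1src (f : I1mor) : bool := match f with i1 => true | _ => false end.
Definition I1tgt (f : I1mor) : bool := match f with i0 => false | _ => true end.
Definition cat1 : Cat :=
  @mkCat bool I1mor I1src I1tgt (fun b => if b then i1 else i0)
    (fun f g _ => match f with f01 => f01 | _ => g end).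

Definition qI : QS := @mkQS cat1 I1mor (fun f => f).

Definition eps (A : QS) (i : bool) : Fun A (qprod A qI) :=
  @mkFun A (qprod A qI) (fun a : ob A => ((a, i) : ob (prod_cat A cat1)))
    (fun f : mor A => ((f, @idm cat1 i) : mor (prod_cat A cat1))).

Definition homotopy (A B : QS) (F G : Fun A B) : Prop :=
  exists H : Fun (qprod A qI) B,
    is_qs_morphism H /\ fcomp H (eps A false) = F /\ fcomp H (eps A true) = G.

Definition hsim (A B : QS) (F G : Fun A B) : Prop := homotopy F G \/ homotopy G F.

Definition hequiv (A B : QS) : relation (Fun A B) := clos_refl_trans (Fun A B) (@hsim A B).

Definition is_self_he (A : QS) (F : Fun A A) : Prop :=
  is_qs_morphism F /\
  exists G : Fun A A, is_qs_morphism G /\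
    hequiv (fcomp F G) (idF A) /\ hequiv (fcomp G F) (idF A).

Definition is_qs_auto (A : QS) (F : Fun A A) : Prop :=
  is_qs_morphism F /\
  exists G : Fun A A, is_qs_morphism G /\ fcomp F G = idF A /\ fcomp G F = idF A.

(* Elements of haut(A): ~=-classes of self-homotopy equivalences, as predicates. *)
Definition hclass (A : QS) (F : Fun A A) : Fun A A -> Prop :=
  fun G => is_self_he G /\ hequiv F G.
(* Elements of hAut(A): ~=-classes of automorphisms. *)
Definition autclass (A : QS) (F : Fun A A) : Fun A A -> Prop :=
  fun G => is_qs_auto G /\ hequiv F G.

Definition rep (A : QS) (P : Fun A A -> Prop) : Fun A A :=
  epsilon (inhabits (idF A)) P.

Definition haut_mul (A : QS) (P Q : Fun A A -> Prop) : Fun A A -> Prop :=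
  hclass (fcomp (rep P) (rep Q)).
Definition hAut_mul (A : QS) (P Q : Fun A A -> Prop) : Fun A A -> Prop :=
  autclass (fcomp (rep P) (rep Q)).

Definition eta (A : QS) (P : Fun A A -> Prop) : Fun A A -> Prop := hclass (rep P).

Section Stilde.
Variable G : Groupoid.

Definition Smor := { p : mor G * mor G | tgt p.1 = tgt p.2 }.

(* (h,g) : g -> h *)
Definition Scomp (x y : Smor) (H : (proj1_sig y).1 = (proj1_sig x).2) : Smor :=
  exist _ ((proj1_sig x).1, (proj1_sig y).2)
    (eq_trans (proj2_sig x) (eq_trans (f_equal tgt (eq_sym H)) (proj2_sig y))).

Definition Scat : Cat :=
  @mkCat (mor G) Smor (fun x => (proj1_sig x).2) (fun x => (proj1_sig x).1)
    (fun g => exist _ (g, g) eq_refl) Scomp.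

Definition Sblk (x : Smor) : mor G :=
  comp (ginv (proj1_sig x).1) (proj1_sig x).2
    (eq_trans (eq_sym (proj2_sig x)) (eq_sym (@src_inv G (proj1_sig x).1))).

Definition Stilde : QS := @mkQS Scat (mor G) Sblk.

(* S~(u) : i |-> u(i), (h,g) |-> (u(h), u(g)).  (The second branch never
   occurs when u is a functor.) *)
Definition Stilde_map (u : Fun G G) : Fun Stilde Stilde :=
  @mkFun Stilde Stilde (fun i : mor G => fm u i)
    (fun x : Smor =>
       match excluded_middle_informative
               (tgt (fm u (proj1_sig x).1) = tgt (fm u (proj1_sig x).2)) with
       | left p => exist _ (fm u (proj1_sig x).1, fm u (proj1_sig x).2) p
       | right _ => exist _ (fm u (proj1_sig x).2, fm u (proj1_sig x).2) eq_refl
       end).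

Definition Sstar1 (u : Fun G G) : Fun Stilde Stilde -> Prop := hclass (Stilde_map u).
Definition Sstar2 (u : Fun G G) : Fun Stilde Stilde -> Prop := autclass (Stilde_map u).
End Stilde.

(* Main.v *)
Require Import Defs.
From Stdlib Require Import Relations List ClassicalEpsilon ProofIrrelevance FunctionalExtensionality PropExtensionality.
Set Implicit Arguments.
Unset Strict Implicit.


Section Alg.
Variable G : Groupoid.
Implicit Types f g h a b c : mor G.

Definition cmp f g : mor G :=
  match excluded_middle_informative (tgt g = src f) with
  | left H => comp f g H | right _ => f end.

Lemma cmpE f g H : cmp f g = comp f g H.
Proof. unfold cmp. destruct excluded_middle_informative as [H'|n].
  - f_equal. apply proof_irrelevance. - contradiction. Qed.

Lemma src_idm x : src (@idm G x) = x.
Proof. destruct (gpd_is_cat G) as [A _]. apply A. Qed.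
Lemma tgt_idm x : tgt (@idm G x) = x.
Proof. destruct (gpd_is_cat G) as [_ [A _]]. apply A. Qed.
Lemma src_cmp f g : tgt g = src f -> src (cmp f g) = src g.
Proof. intro H. rewrite (cmpE H). destruct (gpd_is_cat G) as [_ [_ [A _]]]. apply A. Qed.
Lemma tgt_cmp f g : tgt g = src f -> tgt (cmp f g) = tgt f.
Proof. intro H. rewrite (cmpE H). destruct (gpd_is_cat G) as [_ [_ [_ [A _]]]]. apply A. Qed.
Lemma src_ginv f : src (ginv f) = tgt f. Proof. apply src_inv. Qed.
Lemma tgt_ginv f : tgt (ginv f) = src f. Proof. apply tgt_inv. Qed.

Ltac obj := repeat progress (rewrite ?src_idm, ?tgt_idm, ?src_ginv, ?tgt_ginv;
   try match goal with
   | |- context [src (cmp ?f ?g)] => rewrite (@src_cmp f g) by obj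
   | |- context [tgt (cmp ?f ?g)] => rewrite (@tgt_cmp f g) by obj
   end); try congruence.

Lemma cmp_idl f y : tgt f = y -> cmp (idm y) f = f.
Proof. intro E; subst. assert (H : tgt f = src (idm (tgt f))) by obj.
  rewrite (cmpE H). destruct (gpd_is_cat G) as [_ [_ [_ [_ [A _]]]]]. apply A. Qed.
Lemma cmp_idr f y : src f = y -> cmp f (idm y) = f.
Proof. intro E; subst. assert (H : tgt (idm (src f)) = src f) by obj.
  rewrite (cmpE H). destruct (gpd_is_cat G) as [_ [_ [_ [_ [_ [A _]]]]]]. apply A. Qed.
Lemma cmp_assoc f g h : tgt h = src g -> tgt g = src f ->
  cmp f (cmp g h) = cmp (cmp f g) h.
Proof. intros H1 H3.
  assert (H2 : tgt (comp g h H1) = src f) by (rewrite <- (cmpE H1); obj).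
  assert (H4 : tgt h = src (comp f g H3)) by (rewrite <- (cmpE H3); obj).
  rewrite (cmpE H1), (cmpE H3), (cmpE H2), (cmpE H4).
  destruct (gpd_is_cat G) as [_ [_ [_ [_ [_ [_ A]]]]]]. apply A. Qed.
Lemma cmp_invl f : cmp (ginv f) f = idm (src f).
Proof. assert (H : tgt f = src (ginv f)) by obj. rewrite (cmpE H). apply inv_l. Qed.
Lemma cmp_invr f : cmp f (ginv f) = idm (tgt f).
Proof. assert (H : tgt (ginv f) = src f) by obj. rewrite (cmpE H). apply inv_r. Qed.

Lemma inv_uniq a b : tgt b = src a -> cmp a b = idm (src b) -> a = ginv b.
Proof. intros E H.
  rewrite <- (cmp_idr (f:=a) (y := src a) eq_refl).
  rewrite <- E. rewrite <- (cmp_invr b). rewrite cmp_assoc by obj.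
  rewrite H. apply cmp_idl. obj. Qed.

Lemma ginv_idm x : ginv (@idm G x) = idm x.
Proof. symmetry. apply inv_uniq. obj. rewrite src_idm. apply cmp_idl. obj. Qed.

Lemma ginv_ginv a : ginv (ginv a) = a.
Proof. symmetry. apply inv_uniq. obj. rewrite cmp_invr. obj. Qed.

Lemma ginv_cmp a b : tgt b = src a -> ginv (cmp a b) = cmp (ginv b) (ginv a).
Proof. intro E. symmetry. apply inv_uniq. obj.
  rewrite (cmp_assoc (f:=cmp (ginv b) (ginv a)) (g:=a) (h:=b)) by obj.
  rewrite <- (cmp_assoc (f:=ginv b) (g:=ginv a) (h:=a)) by obj.
  rewrite cmp_invl. rewrite cmp_idr by obj. rewrite cmp_invl. f_equal. obj. Qed.

Lemma cancel_l a b : tgt a = tgt b -> cmp a (cmp (ginv a) b) = b.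
Proof. intro E. rewrite cmp_assoc by obj. rewrite cmp_invr. apply cmp_idl. congruence. Qed.

End Alg.


Lemma blk_lemma (A B : QS) (F : Fun A B) (d : lab A -> lab B) :
  (forall a a' : mor A, blk a = blk a' -> blk (fm F a) = blk (fm F a')) ->
  forall l, exists l', forall a, blk a = l -> blk (fm F a) = l'.
Proof. intros H l. destruct (classic (exists a, blk a = l)) as [[a0 Ha0]|n].
  - exists (blk (fm F a0)). intros a Ha. apply H. congruence.
  - exists (d l). intros a Ha. exfalso. eauto. Qed.

Lemma qs_blk (A B : QS) (F : Fun A B) : is_qs_morphism F ->
  forall a a' : mor A, blk a = blk a' -> blk (fm F a) = blk (fm F a').
Proof. intros [_ HB] a a' E. destruct (HB (blk a)) as [l' Hl].
  rewrite (Hl a eq_refl), (Hl a' (eq_sym E)). reflexivity. Qed.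

Lemma functor_comp (C D E : Cat) (K : Fun D E) (L : Fun C D) :
  is_functor K -> is_functor L -> is_functor (fcomp K L).
Proof. intros [K1 [K2 [K3 K4]]] [L1 [L2 [L3 L4]]]. simpl.
  split; [|split; [|split]]; intros; simpl.
  - rewrite K1, L1. reflexivity.
  - rewrite K2, L2. reflexivity.
  - rewrite L3, K3. reflexivity.
  - assert (H1 : tgt (fm L g) = src (fm L f)) by (rewrite L1, L2; congruence).
    rewrite (L4 f g H H1). apply K4. Qed.

Lemma qs_comp (A B C : QS) (K : Fun B C) (L : Fun A B) :
  is_qs_morphism K -> is_qs_morphism L -> is_qs_morphism (fcomp K L).
Proof. intros HK HL. split. apply functor_comp; [apply HK|apply HL].
  intro l. destruct (proj2 HL l) as [l1 H1]. destruct (proj2 HK l1) as [l2 H2].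
  exists l2. intros a Ha. simpl. apply H2, H1, Ha. Qed.

Definition prodmap (A : QS) (K : Fun A A) : Fun (qprod A qI) (qprod A qI) :=
  @mkFun (qprod A qI) (qprod A qI)
    (fun p : ob (prod_cat A cat1) => ((fo K (fst p), snd p) : ob (prod_cat A cat1)))
    (fun f : mor (prod_cat A cat1) => ((fm K (fst f), snd f) : mor (prod_cat A cat1))).

Lemma prodmap_qs (A : QS) (K : Fun A A) : is_qs_morphism K -> is_qs_morphism (prodmap K).
Proof. intros [[K1 [K2 [K3 K4]]] KB]. split.
  - split; [|split; [|split]]; simpl.
    + intros [f b]; simpl. rewrite K1. reflexivity.
    + intros [f b]; simpl. rewrite K2. reflexivity.
    + intros [x b]; simpl. rewrite K3. reflexivity.
    + intros [f1 f2] [g1 g2] H H'. simpl. f_equal. apply K4.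



  - intros [l1 l2]. destruct (KB l1) as [l1' H]. exists (l1', l2).
    intros [a1 a2] E. simpl in *. injection E; intros; subst. rewrite (H a1 eq_refl). reflexivity.
Qed.

Lemma fcomp_assoc (C D E F : Cat) (a : Fun E F) (b : Fun D E) (c : Fun C D) :
  fcomp (fcomp a b) c = fcomp a (fcomp b c).
Proof. reflexivity. Qed.

Lemma homotopy_l (A B : QS) (K : Fun B B) (F G : Fun A B) :
  is_qs_morphism K -> homotopy F G -> homotopy (fcomp K F) (fcomp K G).
Proof. intros HK [H [HH [H0 H1]]]. exists (fcomp K H). split.
  apply qs_comp; assumption. rewrite !fcomp_assoc, H0, H1. split; reflexivity. Qed.

Lemma homotopy_r (A : QS) (K : Fun A A) (F G : Fun A A) :
  is_qs_morphism K -> homotopy F G -> homotopy (fcomp F K) (fcomp G K).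
Proof. intros HK [H [HH [H0 H1]]]. exists (fcomp H (prodmap K)). split.
  apply qs_comp; [assumption| apply prodmap_qs; assumption].
  split.
  - change (fcomp (fcomp H (eps A false)) K = fcomp F K). rewrite H0. reflexivity.
  - change (fcomp (fcomp H (eps A true)) K = fcomp G K). rewrite H1. reflexivity. Qed.

Lemma hequiv_sym (A B : QS) (F G : Fun A B) : hequiv F G -> hequiv G F.
Proof. induction 1. apply rt_step. destruct H; [right|left]; assumption.
  apply rt_refl. eapply rt_trans; eassumption. Qed.

Lemma hequiv_trans (A B : QS) (F G K : Fun A B) : hequiv F G -> hequiv G K -> hequiv F K.
Proof. apply rt_trans. Qed.

Lemma hequiv_l (A B : QS) (K : Fun B B) (F G : Fun A B) :
  is_qs_morphism K -> hequiv F G -> hequiv (fcomp K F) (fcomp K G).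
Proof. intros HK. induction 1. apply rt_step. destruct H; [left|right]; apply homotopy_l; assumption.
  apply rt_refl. eapply rt_trans; eassumption. Qed.

Lemma hequiv_r (A : QS) (K : Fun A A) (F G : Fun A A) :
  is_qs_morphism K -> hequiv F G -> hequiv (fcomp F K) (fcomp G K).
Proof. intros HK. induction 1. apply rt_step. destruct H; [left|right]; apply homotopy_r; assumption.
  apply rt_refl. eapply rt_trans; eassumption. Qed.

Lemma pred_ext (T : Type) (P Q : T -> Prop) : (forall x, P x <-> Q x) -> P = Q.
Proof. intro H. apply functional_extensionality. intro x. apply propositional_extensionality. apply H. Qed.

Lemma hclass_eq (A : QS) (F G : Fun A A) : hequiv F G -> hclass F = hclass G.
Proof. intro E. apply pred_ext. intro K. unfold hclass. split; intros [H1 H2]; split; auto.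
  eapply hequiv_trans. apply hequiv_sym, E. auto. eapply hequiv_trans; eauto. Qed.

Lemma autclass_eq (A : QS) (F G : Fun A A) : hequiv F G -> autclass F = autclass G.
Proof. intro E. apply pred_ext. intro K. unfold autclass. split; intros [H1 H2]; split; auto.
  eapply hequiv_trans. apply hequiv_sym, E. auto. eapply hequiv_trans; eauto. Qed.

Lemma rep_spec (A : QS) (P : Fun A A -> Prop) F : P F -> P (rep P).
Proof. intro H. unfold rep. apply epsilon_spec. exists F. exact H. Qed.

Lemma self_he_qs (A : QS) (F : Fun A A) : is_self_he F -> is_qs_morphism F.
Proof. intros [H _]; exact H. Qed.
Lemma auto_qs (A : QS) (F : Fun A A) : is_qs_auto F -> is_qs_morphism F.
Proof. intros [H _]; exact H. Qed.
Lemma auto_self_he (A : QS) (F : Fun A A) : is_qs_auto F -> is_self_he F.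
Proof. intros [H [G [HG [E1 E2]]]]. split; auto. exists G. split; auto.
  rewrite E1, E2. split; apply rt_refl. Qed.


Ltac obj := repeat progress (rewrite ?src_idm, ?tgt_idm, ?src_ginv, ?tgt_ginv;
   try match goal with
   | |- context [src (cmp ?f ?g)] => rewrite (@src_cmp _ f g) by obj
   | |- context [tgt (cmp ?f ?g)] => rewrite (@tgt_cmp _ f g) by obj
   end); try congruence.

Lemma Fun_eq (C D : Cat) (F K : Fun C D) : (forall x, fo F x = fo K x) ->
  (forall f, fm F f = fm K f) -> F = K.
Proof. destruct F, K; simpl; intros. f_equal; apply functional_extensionality; auto. Qed.

Section S.
Variable G : Groupoid.

Lemma Smor_eq (x y : Smor G) : fst (proj1_sig x) = fst (proj1_sig y) ->
  snd (proj1_sig x) = snd (proj1_sig y) -> x = y.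
Proof. destruct x as [[a b] p], y as [[c d] q]; simpl; intros; subst.
  f_equal. apply proof_irrelevance. Qed.

Lemma Sblk_cmp (x : Smor G) : Sblk x = cmp (ginv (fst (proj1_sig x))) (snd (proj1_sig x)).
Proof. unfold Sblk. symmetry. apply cmpE. Qed.

Lemma Scat_functor (C : Cat) (K : Fun C (Scat G)) :
  (forall x : ob C, src (idm x) = x) -> (forall x : ob C, tgt (idm x) = x) ->
  (forall (f g : mor C) H, src (comp f g H) = src g) -> (forall (f g : mor C) H, tgt (comp f g H) = tgt f) ->
  (forall f, src (fm K f) = fo K (src f)) -> (forall f, tgt (fm K f) = fo K (tgt f)) ->
  is_functor K.
Proof. intros C1 C2 C3 C4 K1 K2. split; [exact K1|split; [exact K2|split]].
  - intro x. apply Smor_eq.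
    + change (tgt (fm K (idm x)) = fo K x). rewrite K2, C2. reflexivity.
    + change (src (fm K (idm x)) = fo K x). rewrite K1, C1. reflexivity.
  - intros f g H H'. apply Smor_eq.
    + change (tgt (fm K (comp f g H)) = tgt (fm K f)). rewrite !K2, C4. reflexivity.
    + change (src (fm K (comp f g H)) = src (fm K g)). rewrite !K1, C3. reflexivity.
Qed.

Lemma S_fm (u : Fun G G) : (forall f, tgt (fm u f) = fo u (tgt f)) -> forall x,
  proj1_sig (fm (Stilde_map u) x) = (fm u (fst (proj1_sig x)), fm u (snd (proj1_sig x))).
Proof. intros Ht x. unfold Stilde_map; simpl.
  destruct excluded_middle_informative as [p|n]. reflexivity.
  exfalso. apply n. rewrite !Ht. destruct x as [[a b] q]; simpl in *. congruence. Qed.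

Lemma fun_tgt (u : Fun G G) : is_functor u -> forall f, tgt (fm u f) = fo u (tgt f).
Proof. intros [_ [A _]]. exact A. Qed.
Lemma fun_src (u : Fun G G) : is_functor u -> forall f, src (fm u f) = fo u (src f).
Proof. intros [A _]. exact A. Qed.
Lemma fun_idm (u : Fun G G) : is_functor u -> forall x, fm u (idm x) = idm (fo u x).
Proof. intros [_ [_ [A _]]]. exact A. Qed.

Lemma fun_cmp (u : Fun G G) f g : is_functor u -> tgt g = src f ->
  fm u (cmp f g) = cmp (fm u f) (fm u g).
Proof. intros Hu H.
  assert (H' : tgt (fm u g) = src (fm u f)) by (rewrite (fun_tgt Hu), (fun_src Hu); congruence).
  rewrite (cmpE H), (cmpE H'). destruct Hu as [_ [_ [_ A]]]. apply A. Qed.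

Lemma fun_inv (u : Fun G G) f : is_functor u -> fm u (ginv f) = ginv (fm u f).
Proof. intro Hu. apply inv_uniq.
  - rewrite (fun_tgt Hu), (fun_src Hu). obj.
  - rewrite <- fun_cmp by (auto; obj). rewrite cmp_invl, (fun_idm Hu), (fun_src Hu). reflexivity.
Qed.

Lemma S_functor (u : Fun G G) : is_functor u -> is_functor (Stilde_map u).
Proof. intro Hu. apply Scat_functor; try reflexivity.
  - intro f. change (snd (proj1_sig (fm (Stilde_map u) f)) = fm u (snd (proj1_sig f))).
    rewrite S_fm by (apply fun_tgt, Hu). reflexivity.
  - intro f. change (fst (proj1_sig (fm (Stilde_map u) f)) = fm u (fst (proj1_sig f))).
    rewrite S_fm by (apply fun_tgt, Hu). reflexivity.
Qed.

Lemma S_qs (u : Fun G G) : is_functor u -> is_qs_morphism (Stilde_map u).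
Proof. intro Hu. split. apply S_functor, Hu.
  apply (@blk_lemma (Stilde G) (Stilde G) _ (fun l => l)).
  intros a a' E. change (Sblk a = Sblk a') in E. change (Sblk (fm (Stilde_map u) a) = Sblk (fm (Stilde_map u) a')). rewrite !Sblk_cmp in *.
  rewrite !S_fm by (apply fun_tgt, Hu). simpl.
  rewrite <- !(fun_inv _ Hu). rewrite <- !(fun_cmp Hu). rewrite E. reflexivity.
  - destruct a' as [[a1 a2] p]; simpl in *. obj.
  - destruct a as [[a1 a2] p]; simpl in *. obj.
Qed.

Lemma S_comp (u v : Fun G G) : (forall f, tgt (fm u f) = fo u (tgt f)) ->
  (forall f, tgt (fm v f) = fo v (tgt f)) ->
  Stilde_map (fcomp u v) = fcomp (Stilde_map u) (Stilde_map v).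
Proof. intros Hu Hv. apply Fun_eq. reflexivity. intro x.
  assert (Huv : forall f, tgt (fm (fcomp u v) f) = fo (fcomp u v) (tgt f)).
  { intro f; simpl. rewrite Hu, Hv. reflexivity. }
  apply Smor_eq; cbn [fcomp fm]; rewrite !S_fm; auto. Qed.

Lemma S_id : Stilde_map (idF G) = idF (Stilde G).
Proof. apply Fun_eq. reflexivity. intro x.
  apply Smor_eq; cbn [idF fm]; rewrite !S_fm; auto. Qed.

Lemma part1 (u : Fun G G) : is_autofunctor u ->
  is_qs_auto (Stilde_map u) /\ is_self_he (Stilde_map u).
Proof. intros [Hu [v [Hv [E1 E2]]]].
  assert (A : is_qs_auto (Stilde_map u)).
  { split. apply S_qs, Hu. exists (Stilde_map v). split. apply S_qs, Hv.
    rewrite <- !S_comp by (apply fun_tgt; assumption). rewrite E1, E2, S_id. split; reflexivity. }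
  split. exact A. apply auto_self_he, A. Qed.

End S.




Section S4.
Variable G : Groupoid.

Lemma alg1 (a b a' b' : mor G) : tgt a = tgt b -> tgt a' = tgt b' ->
  cmp (ginv a) b = cmp (ginv a') b' -> cmp b (ginv b') = cmp a (ginv a').
Proof. intros Eab Eab' E.
  remember (cmp (ginv a) b) as c eqn:Ec.
  assert (Hb : b = cmp a c) by (subst c; symmetry; apply cancel_l; auto).
  assert (Hb' : b' = cmp a' c) by (rewrite E; symmetry; apply cancel_l; auto).
  assert (T1 : tgt c = src a) by (subst c; obj).
  assert (T2 : tgt c = src a') by (rewrite E; obj).
  rewrite Hb, Hb'. rewrite ginv_cmp by auto.
  rewrite <- cmp_assoc by obj. rewrite (cmp_assoc (f:=c)) by obj.
  rewrite cmp_invr. rewrite cmp_idl by obj. reflexivity. Qed.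

Definition Phi (F : Fun (Stilde G) (Stilde G)) (k : mor G) : mor G :=
  cmp (fo F k) (ginv (fo F (idm (src k)))).

Definition mk (k : mor G) : mor (qprod (Stilde G) qI) :=
  ((exist (fun p : mor G * mor G => tgt (fst p) = tgt (snd p)) (k, k) eq_refl : Smor G), f01).

Lemma homotopy_Phi (F K : Fun (Stilde G) (Stilde G)) : homotopy F K -> forall k, Phi F k = Phi K k.
Proof. intros [H [HH [H0 H1]]] k.
  assert (SF : forall k, snd (proj1_sig (fm H (mk k))) = fo F k).
  { intro k'. change (src (fm H (mk k')) = fo F k'). rewrite (proj1 (proj1 HH)).
    rewrite <- H0. reflexivity. }
  assert (TF : forall k, fst (proj1_sig (fm H (mk k))) = fo K k).
  { intro k'. change (tgt (fm H (mk k')) = fo K k'). rewrite (proj1 (proj2 (proj1 HH))).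
    rewrite <- H1. reflexivity. }
  assert (B : blk (mk k) = blk (mk (idm (src k)))).
  { change ((Sblk (exist (fun p : mor G * mor G => tgt (fst p) = tgt (snd p)) (k, k) eq_refl), f01)
     = (Sblk (exist (fun p : mor G * mor G => tgt (fst p) = tgt (snd p)) (idm (src k), idm (src k)) eq_refl), f01)).
    rewrite !Sblk_cmp. simpl. rewrite !cmp_invl. rewrite src_idm. reflexivity. }
  pose proof (qs_blk HH B) as B'. change (Sblk (fm H (mk k)) = Sblk (fm H (mk (idm (src k))))) in B'.
  rewrite !Sblk_cmp in B'. rewrite !SF, !TF in B'.
  unfold Phi. apply alg1; auto.
  - rewrite <- SF, <- TF. apply (proj2_sig (fm H (mk k))).
  - rewrite <- SF, <- TF. apply (proj2_sig (fm H (mk (idm (src k))))).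
Qed.

Lemma hequiv_Phi (F K : Fun (Stilde G) (Stilde G)) : hequiv F K -> forall k, Phi F k = Phi K k.
Proof. induction 1; intro k.
  - destruct H as [H|H]. apply homotopy_Phi, H. symmetry; apply homotopy_Phi, H.
  - reflexivity.
  - congruence. Qed.

Lemma Phi_S (u : Fun G G) : is_functor u -> forall k, Phi (Stilde_map u) k = fm u k.
Proof. intros Hu k. unfold Phi. change (cmp (fm u k) (ginv (fm u (idm (src k)))) = fm u k).
  rewrite (fun_idm Hu), ginv_idm. apply cmp_idr. apply (fun_src Hu). Qed.

Lemma S_inj (u v : Fun G G) : is_functor u -> is_functor v ->
  hequiv (Stilde_map u) (Stilde_map v) -> u = v.
Proof. intros Hu Hv E. pose proof (hequiv_Phi E) as P.
  assert (M : forall k, fm u k = fm v k).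
  { intro k. rewrite <- (Phi_S Hu), <- (Phi_S Hv). apply P. }
  apply Fun_eq; auto. intro x.
  rewrite <- (src_idm (fo u x)), <- (src_idm (fo v x)), <- (fun_idm Hu), <- (fun_idm Hv), M.
  reflexivity. Qed.

End S4.




Section PhiSec.
Variable G : Groupoid.
Variable phi : mor G -> mor G.
Hypothesis T1 : forall h g : mor G, tgt h = tgt g -> tgt (phi h) = tgt (phi g).
Hypothesis B1 : forall a b a' b' : mor G, tgt a = tgt b -> tgt a' = tgt b' ->
  cmp (ginv a) b = cmp (ginv a') b' -> cmp (ginv (phi a)) (phi b) = cmp (ginv (phi a')) (phi b').

Lemma D1 k : src (phi k) = src (phi (idm (src k))).
Proof. assert (E : cmp (ginv (phi k)) (phi k) = cmp (ginv (phi (idm (src k)))) (phi (idm (src k)))).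
  { apply B1; obj. rewrite !cmp_invl. obj. }
  rewrite !cmp_invl in E. rewrite <- (src_idm (src (phi k))), E. obj. Qed.

Lemma D2 k : tgt (phi k) = tgt (phi (idm (tgt k))).
Proof. apply T1. obj. Qed.

Lemma Pmul f g : tgt g = src f ->
  phi (cmp f g) = cmp (phi f) (cmp (ginv (phi (idm (src f)))) (phi g)).
Proof. intro H.
  assert (E : cmp (ginv (phi f)) (phi (cmp f g)) = cmp (ginv (phi (idm (src f)))) (phi g)).
  { apply B1; obj. rewrite cmp_assoc by obj. rewrite cmp_invl, cmp_idl by obj.
    rewrite ginv_idm, cmp_idl by obj. reflexivity. }
  rewrite <- E. symmetry. apply cancel_l. apply T1. obj. Qed.

Definition U : Fun G G := mkFun (fun x => tgt (phi (idm x)))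
  (fun k => cmp (phi k) (ginv (phi (idm (src k))))).

Lemma U_functor : is_functor U.
Proof. split; [|split; [|split]]; simpl.
  - intro k. pose proof (D1 k). obj.
  - intro k. pose proof (D1 k). pose proof (D2 k). obj.
  - intro x. rewrite src_idm, cmp_invr. reflexivity.
  - intros f g H H'. rewrite <- (cmpE H), <- (cmpE H').
    pose proof (D1 f). pose proof (D1 g). pose proof (D2 g).
    assert (tgt (phi (idm (tgt g))) = tgt (phi (idm (src f)))) by congruence.
    rewrite (src_cmp H). rewrite Pmul by auto.
    rewrite <- !cmp_assoc by obj. reflexivity. Qed.

End PhiSec.

Lemma UV (G : Groupoid) (phi phi' : mor G -> mor G)
  (T1 : forall h g : mor G, tgt h = tgt g -> tgt (phi h) = tgt (phi g))
  (B1 : forall a b a' b' : mor G, tgt a = tgt b -> tgt a' = tgt b' ->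
     cmp (ginv a) b = cmp (ginv a') b' -> cmp (ginv (phi a)) (phi b) = cmp (ginv (phi a')) (phi b'))
  (T1' : forall h g : mor G, tgt h = tgt g -> tgt (phi' h) = tgt (phi' g))
  (B1' : forall a b a' b' : mor G, tgt a = tgt b -> tgt a' = tgt b' ->
     cmp (ginv a) b = cmp (ginv a') b' -> cmp (ginv (phi' a)) (phi' b) = cmp (ginv (phi' a')) (phi' b'))
  (INV : forall k, phi (phi' k) = k) :
  fcomp (U phi) (U phi') = idF G.
Proof. apply Fun_eq; simpl.
  - intro x. rewrite <- (D2 T1). rewrite (INV (idm x)). obj.
  - intro k. set (ek := idm (src k)).
    set (f0 := phi' ek). set (g := ginv f0).
    assert (Hb : src (phi' k) = src f0) by apply (D1 B1').
    assert (E1 : phi (cmp (phi' k) g) = cmp k (cmp (ginv (phi (idm (src (phi' k))))) (phi g))).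
    { rewrite (Pmul T1 B1) by (unfold g; obj). rewrite INV. reflexivity. }
    set (X := cmp (ginv (phi (idm (src (phi' k))))) (phi g)) in *.
    assert (E2 : phi (cmp f0 g) = cmp ek X).
    { rewrite (Pmul T1 B1) by (unfold g; obj). unfold f0. rewrite INV. unfold X. rewrite Hb. reflexivity. }
    assert (S1 : src (phi f0) = src (phi (idm (src f0)))) by apply (D1 B1).
    assert (S2 : src (phi f0) = src k) by (unfold f0; rewrite INV; unfold ek; obj).
    assert (TX : tgt X = src k).
    { assert (tgt (phi g) = tgt (phi (idm (src f0)))) by (rewrite (D2 T1 g); unfold g; rewrite tgt_ginv; reflexivity).
      unfold X. rewrite Hb. obj. }
    unfold g in E2. rewrite cmp_invr in E2. unfold ek in E2. rewrite cmp_idl in E2 by obj.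
    assert (SV : src (cmp (phi' k) g) = tgt f0) by (unfold g; obj).
    rewrite SV, E1, E2. rewrite <- cmp_assoc by obj. rewrite cmp_invr, cmp_idr by obj. reflexivity.
Qed.




Section H.
Variable G : Groupoid.

Definition smk (h g : mor G) (H : tgt h = tgt g) : Smor G :=
  exist (fun p : mor G * mor G => tgt (fst p) = tgt (snd p)) (h, g) H.

Lemma F_proj (F : Fun (Stilde G) (Stilde G)) : is_functor F -> forall x,
  proj1_sig (fm F x) = (fo F (fst (proj1_sig x)), fo F (snd (proj1_sig x))).
Proof. intros [F1 [F2 _]] x. rewrite (surjective_pairing (proj1_sig (fm F x))). f_equal.
  - change (tgt (fm F x) = fo F (tgt x)). apply F2.
  - change (src (fm F x) = fo F (src x)). apply F1. Qed.

Lemma F_T1 (F : Fun (Stilde G) (Stilde G)) : is_functor F ->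
  forall h g : mor G, tgt h = tgt g -> tgt (fo F h) = tgt (fo F g).
Proof. intros HF h g H. pose proof (proj2_sig (fm F (smk H))) as P. simpl in P.
  rewrite (F_proj HF) in P. exact P. Qed.

Lemma F_B1 (F : Fun (Stilde G) (Stilde G)) : is_qs_morphism F ->
  forall a b a' b' : mor G, tgt a = tgt b -> tgt a' = tgt b' ->
  cmp (ginv a) b = cmp (ginv a') b' -> cmp (ginv (fo F a)) (fo F b) = cmp (ginv (fo F a')) (fo F b').
Proof. intros HF a b a' b' H H' E.
  assert (E' : blk (q:=Stilde G) (smk H) = blk (q:=Stilde G) (smk H')).
  { change (Sblk (smk H) = Sblk (smk H')). rewrite !Sblk_cmp. exact E. }
  pose proof (qs_blk HF E') as B. change (Sblk (fm F (smk H)) = Sblk (fm F (smk H'))) in B.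
  rewrite !Sblk_cmp, !(F_proj (proj1 HF)) in B. exact B. Qed.

Lemma Kalg (ph : mor G -> mor G) h g : src (ph h) = src (ph (idm (src h))) ->
  tgt (ph h) = tgt (ph g) ->
  cmp (ginv (cmp (ph h) (ginv (ph (idm (src h)))))) (ph g) =
  cmp (ph (idm (src h))) (cmp (ginv (ph h)) (ph g)).
Proof. intros D T. rewrite ginv_cmp by obj. rewrite ginv_ginv. rewrite <- cmp_assoc by obj. reflexivity. Qed.

Variable F : Fun (Stilde G) (Stilde G).
Hypothesis HF : is_qs_morphism F.

Definition phi : mor G -> mor G := fo F.
Definition UF : Fun G G := U phi.

Lemma UF_functor : is_functor UF.
Proof. apply U_functor. apply F_T1, HF. apply F_B1, HF. Qed.

Lemma UF_tgt h g : tgt h = tgt g -> tgt (fm UF h) = tgt (fo F g).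
Proof. intro H. rewrite (fun_tgt UF_functor). simpl. rewrite H.
  symmetry. apply (D2 (phi := fo F)). apply F_T1, HF. Qed.

Definition Hf01 (x : Smor G) : Smor G :=
  match excluded_middle_informative (tgt (fm UF (fst (proj1_sig x))) = tgt (fo F (snd (proj1_sig x)))) with
  | left p => exist (fun p : mor G * mor G => tgt (fst p) = tgt (snd p)) (fm UF (fst (proj1_sig x)), fo F (snd (proj1_sig x))) p
  | right _ => exist (fun p : mor G * mor G => tgt (fst p) = tgt (snd p)) (fo F (snd (proj1_sig x)), fo F (snd (proj1_sig x))) eq_refl
  end.

Lemma Hf01_proj x : proj1_sig (Hf01 x) = (fm UF (fst (proj1_sig x)), fo F (snd (proj1_sig x))).
Proof. unfold Hf01. destruct excluded_middle_informative as [p|n]. reflexivity.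
  exfalso. apply n. apply UF_tgt. apply (proj2_sig x). Qed.

Definition Hmap : Fun (qprod (Stilde G) qI) (Stilde G) :=
  @mkFun (qprod (Stilde G) qI) (Stilde G)
    (fun p : ob (prod_cat (Scat G) cat1) => if snd p then fm UF (fst p) else fo F (fst p))
    (fun m : mor (prod_cat (Scat G) cat1) => match snd m with
       | i0 => fm F (fst m) | i1 => fm (Stilde_map UF) (fst m) | f01 => Hf01 (fst m) end).

Lemma Hmap_qs : is_qs_morphism Hmap.
Proof. split.
  - apply (@Scat_functor G (prod_cat (Scat G) cat1)).
    + intros [k b]; destruct b; reflexivity.
    + intros [k b]; destruct b; reflexivity.
    + intros [f1 f2] [g1 g2] H. pose proof (f_equal snd H) as H2. simpl in H2.
      destruct f2, g2; simpl in *; try discriminate; reflexivity.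
    + intros [f1 f2] [g1 g2] H. pose proof (f_equal snd H) as H2. simpl in H2.
      destruct f2, g2; simpl in *; try discriminate; reflexivity.
    + intros [x m]. destruct m.
      * change (src (fm F x) = fo F (src x)). apply (proj1 (proj1 HF)).
      * change (src (fm (Stilde_map UF) x) = fo (Stilde_map UF) (src x)).
        apply (proj1 (S_functor UF_functor)).
      * change (snd (proj1_sig (Hf01 x)) = fo F (snd (proj1_sig x))). rewrite Hf01_proj. reflexivity.
    + intros [x m]. destruct m.
      * change (tgt (fm F x) = fo F (tgt x)). apply (proj1 (proj2 (proj1 HF))).
      * change (tgt (fm (Stilde_map UF) x) = fo (Stilde_map UF) (tgt x)).
        apply (proj1 (proj2 (S_functor UF_functor))).
      * change (fst (proj1_sig (Hf01 x)) = fm UF (fst (proj1_sig x))). rewrite Hf01_proj. reflexivity.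
  - apply (@blk_lemma (qprod (Stilde G) qI) (Stilde G) Hmap (fun l => fst l)).
    intros [x m] [x' m'] E. change ((Sblk x, m) = (Sblk x', m')) in E.
    injection E; intros Em Ex; subst m'.
    assert (Ex' : blk (q:=Stilde G) x = blk (q:=Stilde G) x') by exact Ex.
    destruct m.
    + change (blk (q:=Stilde G) (fm F x) = blk (q:=Stilde G) (fm F x')). apply (qs_blk HF Ex').
    + change (blk (q:=Stilde G) (fm (Stilde_map UF) x) = blk (q:=Stilde G) (fm (Stilde_map UF) x')).
      apply (qs_blk (S_qs UF_functor) Ex').
    + change (Sblk (Hf01 x) = Sblk (Hf01 x')). rewrite !Sblk_cmp, !Hf01_proj.
      rewrite !Sblk_cmp in Ex.
      destruct x as [[h g] p], x' as [[h' g'] p']. simpl in *.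
      assert (Eh : src h = src h').
      { rewrite <- (tgt_ginv h), <- (tgt_ginv h'), <- (tgt_cmp (f:=ginv h) (g:=g)), <- (tgt_cmp (f:=ginv h') (g:=g')), Ex; obj. }
      assert (B : cmp (ginv (phi h)) (phi g) = cmp (ginv (phi h')) (phi g')).
      { apply F_B1; auto. }
      assert (K : forall h g, tgt h = tgt g -> cmp (ginv (fm UF h)) (fo F g) =
                 cmp (phi (idm (src h))) (cmp (ginv (phi h)) (phi g))).
      { clear - HF. intros h g H. change (fm UF h) with (cmp (phi h) (ginv (phi (idm (src h))))).
        apply Kalg. apply (D1 (phi := fo F) (F_B1 HF) h). apply (F_T1 (proj1 HF) H). }
      transitivity (cmp (phi (idm (src h))) (cmp (ginv (phi h)) (phi g))). apply (K h g p).
      rewrite B, Eh. symmetry. apply (K h' g' p').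
Qed.

Lemma F_homotopy : homotopy F (Stilde_map UF).
Proof. exists Hmap. split. apply Hmap_qs. split; apply Fun_eq; reflexivity. Qed.

End H.

Lemma part5c (G : Groupoid) (F : Fun (Stilde G) (Stilde G)) : is_qs_auto F ->
  exists u : Fun G G, is_autofunctor u /\ Sstar2 u = autclass F.
Proof. intros [HF [F' [HF' [E1 E2]]]]. exists (UF F). split.
  - split. apply UF_functor, HF. exists (UF F'). split. apply UF_functor, HF'.
    assert (I1 : forall k, fo F (fo F' k) = k) by (intro k; exact (f_equal (fun X => fo X k) E1)).
    assert (I2 : forall k, fo F' (fo F k) = k) by (intro k; exact (f_equal (fun X => fo X k) E2)).
    split; apply UV; auto; first [apply F_T1, HF | apply F_T1, HF' | apply F_B1, HF | apply F_B1, HF'].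
  - unfold Sstar2. apply autclass_eq. apply hequiv_sym. apply rt_step. left. apply F_homotopy, HF.
Qed.

Unset Implicit Arguments.
Set Strict Implicit.
Theorem theorem4p7 (G : Groupoid) :
  (forall u : Fun G G, is_autofunctor u ->
     is_qs_auto (Stilde_map u) /\ is_self_he (Stilde_map u)) /\
  (forall u : Fun G G, is_autofunctor u -> eta (Sstar2 u) = Sstar1 u) /\
  (forall u v : Fun G G, is_autofunctor u -> is_autofunctor v ->
     Sstar1 (fcomp u v) = haut_mul (Sstar1 u) (Sstar1 v)) /\
  (forall u v : Fun G G, is_autofunctor u -> is_autofunctor v ->
     Sstar1 u = Sstar1 v -> u = v) /\
  (finite_groupoid G ->
     (forall u v : Fun G G, is_autofunctor u -> is_autofunctor v ->
        Sstar2 (fcomp u v) = hAut_mul (Sstar2 u) (Sstar2 v)) /\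
     (forall u v : Fun G G, is_autofunctor u -> is_autofunctor v ->
        Sstar2 u = Sstar2 v -> u = v) /\
     (forall F : Fun (Stilde G) (Stilde G), is_qs_auto F ->
        exists u : Fun G G, is_autofunctor u /\ Sstar2 u = autclass F)).
Proof.
  assert (Ra : forall u : Fun G G, is_autofunctor u -> autclass (Stilde_map u) (rep (autclass (Stilde_map u)))).
  { intros u Hu. apply rep_spec with (Stilde_map u). split. apply (part1 Hu). apply rt_refl. }
  assert (Rh : forall u : Fun G G, is_autofunctor u -> hclass (Stilde_map u) (rep (hclass (Stilde_map u)))).
  { intros u Hu. apply rep_spec with (Stilde_map u). split. apply (part1 Hu). apply rt_refl. }
  split; [|split; [|split; [|split]]].
  - intros u Hu. apply part1, Hu.
  - intros u Hu. unfold eta, Sstar2, Sstar1. symmetry. apply hclass_eq. apply (proj2 (Ra u Hu)).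
  - intros u v Hu Hv. unfold haut_mul, Sstar1.
    rewrite (S_comp (fun_tgt (proj1 Hu)) (fun_tgt (proj1 Hv))).
    apply hclass_eq. destruct (Rh u Hu) as [Su Eu]. destruct (Rh v Hv) as [Sv Ev].
    eapply hequiv_trans. apply hequiv_r. apply S_qs, Hv. exact Eu.
    apply hequiv_l. apply self_he_qs, Su. exact Ev.
  - intros u v Hu Hv E. apply S_inj. apply Hu. apply Hv.
    assert (A : Sstar1 v (Stilde_map u)) by (rewrite <- E; split; [apply (part1 Hu)| apply rt_refl]).
    apply hequiv_sym, (proj2 A).
  - intros _. split; [|split].
    + intros u v Hu Hv. unfold hAut_mul, Sstar2.
      rewrite (S_comp (fun_tgt (proj1 Hu)) (fun_tgt (proj1 Hv))).
      apply autclass_eq. destruct (Ra u Hu) as [Su Eu]. destruct (Ra v Hv) as [Sv Ev].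
      eapply hequiv_trans. apply hequiv_r. apply S_qs, Hv. exact Eu.
      apply hequiv_l. apply auto_qs, Su. exact Ev.
    + intros u v Hu Hv E. apply S_inj. apply Hu. apply Hv.
      assert (A : Sstar2 v (Stilde_map u)) by (rewrite <- E; split; [apply (part1 Hu)| apply rt_refl]).
      apply hequiv_sym, (proj2 A).
    + apply part5c.
Qed.
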